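(* Let $E$, $s$ and $\mathrm{Rel}(s,\cdot)$ be as follows, and let $\mathcal{I}$ be the layout-constraint family below. Let $T^*\in\arg\max_{T\in\mathcal{I}}\mathrm{Rel}(s,T)$ and let $\hat T$ be the output of the algorithm GreedyTimeline: start with $\hat T=\emptyset$; repeatedly let $C=\{e\in E\setminus\hat T:\hat T\cup\{e\}\in\mathcal{I}\}$ and, if $C\neq\emptyset$, add to $\hat T$ an element $e\in C$ maximizing the marginal gain $\mathrm{Rel}(s,\hat T\cup\{e\})-\mathrm{Rel}(s,\hat T)$; stop when $C=\emptyset$ and return $\hat T$. Then $\mathrm{Rel}(s,\hat T)\ge \tfrac13\,\mathrm{Rel}(s,T^* )$, for any subject $s$.
   Context: Events: $\mathcal{E}$ is a finite set of events over all subjects; $E\subseteq\mathcal{E}$ is the finite set of candidate events of subject $s$. Each event $e$ has a subject $\mathrm{Sub}(e)$, a related entity $\mathrm{RE}(e)$, a timestamp $\tau(e)\in\mathbb{R}$, an entity path $\pi_{RE}(e)$ and a time path $\pi_\tau(e)$. Nonnegative scores $\mathrm{E2ECooc}(x,y)\ge0$ (entity–entity), $\mathrm{E2DCooc}(x,t)\ge0$ (entity–date) and $\mathrm{GlobalImportance}(re)\ge0$ are given. With $0\le\lambda\le1$ and $w^e_1,w^e_2,w^e_3,w^d_1,w^d_2\ge0$, $\mathrm{Rel}(s,T)=\lambda(w^e_1\mathrm{E2E}(s,T)+w^e_2\mathrm{E2EPath}(T)+w^e_3\mathrm{G2E}(T))+(1-\lambda)(w^d_1\mathrm{E2D}(s,T)+w^d_2\mathrm{E2DPath}(T))$,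 where $\mathrm{E2E}(s,T)=\sum_{re\in\{\mathrm{RE}(e):e\in T\}}\mathrm{E2ECooc}(s,re)$, $\mathrm{G2E}(T)=\sum_{re\in\{\mathrm{RE}(e):e\in T\}}\mathrm{GlobalImportance}(re)$, $\mathrm{E2EPath}(T)=\sum_{p\in\{\pi_{RE}(e):e\in T\}}\operatorname{average}_{e\in\mathcal{E},\pi_{RE}(e)=p}\mathrm{E2ECooc}(\mathrm{Sub}(e),\mathrm{RE}(e))$, $\mathrm{E2D}(s,T)=\sum_{t\in\{\tau(e):e\in T\}}\mathrm{E2DCooc}(s,t)$, $\mathrm{E2DPath}(T)=\sum_{p\in\{\pi_\tau(e):e\in T\}}\operatorname{average}_{e\in\mathcal{E},\pi_\tau(e)=p}\mathrm{E2DCooc}(\mathrm{Sub}(e),\tau(e))$; all sums are over sets (each distinct value counted once). Layout constraint: fix a real $t_w>0$ and an integer $n\ge1$; $\mathcal{I}$ is the family of all $T\subseteq E$ with $|\{e\in T:\tau(e)\in[t,t+t_w)\}|\le n$ for every $t\in\mathbb{R}$. *)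

(* Defs.v *)
From HB Require Import structures.
From mathcomp Require Import all_boot all_order all_algebra.
Set Implicit Arguments. Unset Strict Implicit. Unset Printing Implicit Defensive.
Import Order.TTheory GRing.Theory Num.Theory.
Local Open Scope ring_scope.

Section Relevance.
Variables (R : realFieldType) (Ev : finType) (Ent PRE PT : eqType).
(* Ev : the finite set of all events (curly E); Ent : entities (subjects and
   related entities); PRE / PT : entity paths / time paths *)
Variables (Sub RE : Ev -> Ent) (tau : Ev -> R) (piRE : Ev -> PRE) (piT : Ev -> PT).
Variables (E2ECooc : Ent -> Ent -> R) (E2DCooc : Ent -> R -> R) (GlobalImportance : Ent -> R).

Definition E2E (s : Ent) (T : {set Ev}) : R :=
  \sum_(re <- undup [seq RE e | e <- enum T]) E2ECooc s re.

Definition G2E (T : {set Ev}) : R :=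
  \sum_(re <- undup [seq RE e | e <- enum T]) GlobalImportance re.

Definition avgE2EPath (p : PRE) : R :=
  (\sum_(e | piRE e == p) E2ECooc (Sub e) (RE e)) / #|[pred e | piRE e == p]|%:R.

Definition E2EPath (T : {set Ev}) : R :=
  \sum_(p <- undup [seq piRE e | e <- enum T]) avgE2EPath p.

Definition E2D (s : Ent) (T : {set Ev}) : R :=
  \sum_(t <- undup [seq tau e | e <- enum T]) E2DCooc s t.

Definition avgE2DPath (p : PT) : R :=
  (\sum_(e | piT e == p) E2DCooc (Sub e) (tau e)) / #|[pred e | piT e == p]|%:R.

Definition E2DPath (T : {set Ev}) : R :=
  \sum_(p <- undup [seq piT e | e <- enum T]) avgE2DPath p.

Variables (lambda we1 we2 we3 wd1 wd2 : R).

Definition Rel (s : Ent) (T : {set Ev}) : R :=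
  lambda * (we1 * E2E s T + we2 * E2EPath T + we3 * G2E T)
  + (1 - lambda) * (wd1 * E2D s T + wd2 * E2DPath T).

End Relevance.

Definition layoutI (R : realFieldType) (Ev : finType) (tau : Ev -> R)
  (tw : R) (n : nat) (E T : {set Ev}) : Prop :=
  T \subset E /\
  forall t : R, (#|[set e in T | (t <= tau e)%R && (tau e < t + tw)%R]| <= n)%N.

(* l is the sequence of elements added by a run of the greedy algorithm
   (with arbitrary tie-breaking) maximizing the marginal gain of f over the
   independence family indep on ground set E; the output is [set x in l]. *)
Definition greedy_run (R : realFieldType) (Ev : finType) (E : {set Ev})
  (indep : {set Ev} -> Prop) (f : {set Ev} -> R) (l : seq Ev) : Prop :=
  (forall pre e post, l = pre ++ e :: post ->
     [/\ e \in E, e \notin [set x in pre], indep (e |: [set x in pre]) &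
       forall e', e' \in E -> e' \notin [set x in pre] ->
         indep (e' |: [set x in pre]) ->
         f (e' |: [set x in pre]) - f [set x in pre]
           <= f (e |: [set x in pre]) - f [set x in pre]]) /\
  (forall e, e \in E -> e \notin [set x in l] -> ~ indep (e |: [set x in l])).

(* Main.v *)
Require Import Defs.
From HB Require Import structures.
From mathcomp Require Import all_boot all_order all_algebra.
From mathcomp Require Import ring lra.
Import Order.TTheory GRing.Theory Num.Theory.
Local Open Scope ring_scope.

Section Aux.
Variables (R : realFieldType) (Ev : finType).

Lemma seq_max (g : Ev -> R) (s : seq Ev) :
  s = [::] \/ exists2 z, z \in s & forall o, o \in s -> g o <= g z.
Proof.
elim: s => [|a s [->|[z Hz Hm]]]; first by left.
- right; exists a; first by rewrite inE eqxx.
  by move=> o; rewrite inE => /eqP->.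
- right; case: (lerP (g a) (g z)) => Ha.
  + exists z; first by rewrite inE Hz orbT.
    by move=> o; rewrite inE => /orP[/eqP->|/Hm].
  + exists a; first by rewrite inE eqxx.
    move=> o; rewrite inE => /orP[/eqP->//|/Hm Ho].
    exact: le_trans Ho (ltW Ha).
Qed.

Lemma set_max (g : Ev -> R) (L : {set Ev}) :
  exists Z : {set Ev}, [/\ Z \subset L, (#|Z| <= 1)%N &
    forall o, o \in L -> exists2 z, z \in Z & g o <= g z].
Proof.
case: (seq_max g (enum L)) => [He|[z Hz Hm]].
- exists set0; split => //; first exact: sub0set; first by rewrite cards0.
  by move=> o Ho; move: (mem_enum L o); rewrite He Ho.
- exists [set z]; split; first by rewrite sub1set -mem_enum.
    by rewrite cards1.
  move=> o Ho; exists z; first by rewrite inE.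
  by apply: Hm; rewrite mem_enum.
Qed.

Variables (tau : Ev -> R) (tw : R) (n : nat) (E : {set Ev}).
Local Notation I := (layoutI tau tw n E).

Lemma layout_sub (T T' : {set Ev}) : T \subset T' -> I T' -> I T.
Proof.
move=> HT [HE Hw]; split; first exact: subset_trans HT HE.
move=> t; apply: leq_trans (Hw t); apply: subset_leq_card.
apply/subsetP => y; rewrite !inE => /andP[Hy ->]; rewrite andbT.
exact: (subsetP HT).
Qed.

Lemma extend (A O : {set Ev}) x : I (A :|: O) -> I (x |: A) ->
  exists Z : {set Ev}, [/\ Z \subset O, (#|Z| <= 2)%N &
     I (x |: (A :|: (O :\: Z)))].
Proof.
move=> [HE Hw] [HE' Hw'].
have [Zl [Zl1 Zl2 Zl3]] := set_max tau [set o in O :\: A | tau o <= tau x].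
have [Zr [Zr1 Zr2 Zr3]] := set_max (fun e => - tau e) [set o in O :\: A | tau x <= tau o].
exists (Zl :|: Zr); split.
- rewrite subUset; apply/andP; split.
  + apply: subset_trans Zl1 _; apply/subsetP => y; rewrite !inE.
    by case/andP => /andP[].
  + apply: subset_trans Zr1 _; apply/subsetP => y; rewrite !inE.
    by case/andP => /andP[].
- apply: leq_trans (leq_card_setU _ _) _.
  by rewrite -[2%N]/(1 + 1)%N leq_add.
split.
- rewrite subUset; apply/andP; split.
  + by rewrite sub1set; apply: (subsetP HE'); rewrite setU11.
  + apply: subset_trans HE; apply/subsetP => y; rewrite !inE.
    by case/orP => [->//|/andP[_ ->]]; rewrite orbT.
move=> t.
have HW := Hw t; have HW' := Hw' t.
set W := [set e in A :|: O | _] in HW.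
case Px: ((t <= tau x) && (tau x < t + tw)); last first.
  apply: leq_trans HW; apply: subset_leq_card; apply/subsetP => y.
  rewrite !inE => /andP[/orP[/eqP ->|]]; first by rewrite Px.
  case/orP => [->//|/andP[_ ->]] ->; by rewrite orbT.
case: (boolP [exists o, (o \in O :\: A) && ((t <= tau o) && (tau o < t + tw))]).
- case/existsP => o /andP[Ho /andP[Ho1 Ho2]].
  have [z [Hz1 Hz2 Hz3 Hz4]] : exists z, [/\ z \in Zl :|: Zr, z \in O :\: A,
       t <= tau z & tau z < t + tw].
    case/andP: Px => Px1 Px2.
    case/orP: (le_total (tau o) (tau x)) => Hox.
    + have HoL : o \in [set o in O :\: A | tau o <= tau x] by rewrite inE Ho Hox.
      have [z Hz Hoz] := Zl3 o HoL.
      have := subsetP Zl1 z Hz; rewrite inE => /andP[HzO Hzx].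
      exists z; split => //; first by rewrite inE Hz.
        exact: le_trans Hoz.
      exact: le_lt_trans Px2.
    + have HoL : o \in [set o in O :\: A | tau x <= tau o] by rewrite inE Ho Hox.
      have [z Hz Hoz] := Zr3 o HoL.
      have := subsetP Zr1 z Hz; rewrite inE => /andP[HzO Hzx].
      rewrite lerN2 in Hoz.
      exists z; split => //; first by rewrite inE Hz orbT.
        exact: le_trans Hzx.
      exact: le_lt_trans Ho2.
  have HzW : z \in W.
    rewrite inE Hz3 Hz4 andbT; move: Hz2; rewrite !inE => /andP[_ ->].
    by rewrite orbT.
  apply: (@leq_trans #|x |: (W :\ z)|).
    apply: subset_leq_card; apply/subsetP => y; rewrite !inE.
    case/andP => /orP[->//|Hy] Hyw; apply/orP; right.
    move: Hy => /orP[HyA|/andP[HyZ HyO]].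
      rewrite HyA Hyw /= andbT; apply/eqP => Eyz; move: Hz2.
    by rewrite -Eyz inE HyA.
    rewrite HyO Hyw orbT /= andbT; apply/eqP => Eyz.
    by move: HyZ; rewrite Eyz -in_setU Hz1.
  rewrite (cardsD1 z W) HzW in HW; rewrite cardsU1.
  by apply: leq_trans HW; rewrite leq_add2r leq_b1.
- rewrite negb_exists => /forallP Hno.
  apply: leq_trans HW'; apply: subset_leq_card; apply/subsetP => y.
  rewrite !inE => /and3P[Hy Hy1 Hy2]; rewrite Hy1 Hy2 !andbT.
  case/or3P: Hy => [->//|->//|/andP[_ HyO]]; rewrite ?orbT //.
  case HA: (y \in A); first by rewrite orbT.
  by have := Hno y; rewrite !inE HyO HA Hy1 Hy2.
Qed.
End Aux.

Section Greedy.
Variables (R : realFieldType) (Ev : finType) (f : {set Ev} -> R)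
  (I : {set Ev} -> Prop) (E : {set Ev}).
Hypothesis Hinc : forall T x, f T <= f (x |: T).
Hypothesis Hdec : forall (A B : {set Ev}) x, A \subset B ->
  f (x |: B) - f B <= f (x |: A) - f A.
Hypothesis Hsub : forall T T' : {set Ev}, T \subset T' -> I T' -> I T.
Hypothesis Hext : forall (A O : {set Ev}) x, I (A :|: O) -> I (x |: A) ->
  exists Z : {set Ev}, [/\ Z \subset O, (#|Z| <= 2)%N &
     I (x |: (A :|: (O :\: Z)))].
Hypothesis Hf0 : f set0 = 0.

Lemma setU1_in (z : Ev) (A : {set Ev}) : z \in A -> z |: A = A.
Proof. by move=> Hz; apply/setP => y; rewrite !inE; case: eqP => // ->. Qed.

Lemma union_bound (s : seq Ev) (G : {set Ev}) :
  f ([set x in s] :|: G) <= f G + \sum_(o <- s) (f (o |: G) - f G).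
Proof.
elim: s => [|a s IH].
  by rewrite big_nil addr0 set_nil set0U.
rewrite set_cons -setUA big_cons.
set S := [set x in s] :|: G.
have := @Hdec _ _ a (subsetUr [set x in s] G); rewrite -/S => Hd.
lra.
Qed.

Lemma union_mono (s : seq Ev) (G : {set Ev}) : f G <= f ([set x in s] :|: G).
Proof.
elim: s => [|a s IH]; first by rewrite set_nil set0U.
by rewrite set_cons -setUA; apply: le_trans IH (Hinc _ _).
Qed.

Theorem greedy_bound (Tstar : {set Ev}) (l : seq Ev) :
  I Tstar -> Tstar \subset E -> greedy_run E I f l ->
  f Tstar <= 3%:R * f [set x in l].
Proof.
move=> HT HTE [Hstep Hlast].
set G := [set x in l].
pose D o := f (o |: G) - f G.
have D0 : forall o, o \in G -> D o = 0.
  by move=> o Ho; rewrite /D setU1_in // subrr.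
have Inv : forall pre, (exists post, l = pre ++ post) ->
  exists2 O : {set Ev}, O \subset Tstar /\ I ([set x in pre] :|: O) &
    \sum_(o in Tstar) D o <= \sum_(o in O) D o
        + 2%:R * (f [set x in pre] - f set0).
  elim/last_ind => [_|p e IH [post Hl]].
    exists Tstar; first by rewrite set_nil set0U.
    by rewrite subrr mulr0 addr0.
  have [O [HO1 HO2] HO3] : exists2 O : {set Ev}, O \subset Tstar /\
       I ([set x in p] :|: O) & \sum_(o in Tstar) D o <= \sum_(o in O) D o
        + 2%:R * (f [set x in p] - f set0).
    by apply: IH; exists (e :: post); rewrite Hl cat_rcons.
  have Hl' : l = p ++ e :: post by rewrite Hl cat_rcons.
  have [He1 He2 He3 He4] := Hstep _ _ _ Hl'.
  set A := [set x in p] in HO2 HO3 He2 He3 He4.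
  have HAG : A \subset G.
    by apply/subsetP => y; rewrite !inE Hl' mem_cat => ->.
  have [Z [HZ1 HZ2 HZ3]] := @Hext _ _ _ HO2 He3.
  have HrA : [set x in rcons p e] = e |: A.
    by apply/setP => y; rewrite !inE mem_rcons inE.
  exists (O :\: Z).
    split; first by apply: subset_trans HO1; apply: subsetDl.
    by rewrite HrA -setUA.
  rewrite HrA.
  set d := f (e |: A) - f A.
  have d0 : 0 <= d by rewrite subr_ge0.
  have HDz : forall z, z \in Z -> D z <= d.
    move=> z Hz; apply: le_trans (@Hdec _ _ z HAG) _.
    case HzA: (z \in A).
      by rewrite setU1_in // subrr.
    apply: He4; last first.
      apply: (@Hsub _ _ _ HO2); rewrite subUset subsetUl andbT sub1set inE.
      by rewrite (subsetP HZ1) ?orbT.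
    - by rewrite HzA.
    - by apply: (subsetP HTE); apply: (subsetP HO1); apply: (subsetP HZ1).
  rewrite [\sum_(o in O) _](big_setID Z) /= (setIidPr HZ1) in HO3.
  apply: le_trans HO3 _.
  have HsZ : \sum_(o in Z) D o <= 2%:R * d.
    apply: le_trans (ler_sum _ HDz) _.
    have HZ : (#|Z|%:R : R) <= 2%:R by rewrite ler_nat.
    rewrite sumr_const -[d *+ _]mulr_natl; nra.
  rewrite /d in HsZ; lra.
have [O [HO1 HO2] HO3] := Inv l (ex_intro _ [::] (esym (cats0 l))).
rewrite -/G in HO2 HO3.
have HO0 : \sum_(o in O) D o = 0.
  apply: big1 => o Ho; case HoG: (o \in G); first exact: D0.
  exfalso; apply: (Hlast o).
  - by apply: (subsetP HTE); apply: (subsetP HO1).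
  - by rewrite HoG.
  - by apply: (@Hsub _ _ _ HO2); rewrite subUset subsetUl andbT sub1set inE Ho orbT.
have H1 := union_mono (enum G) Tstar.
have H2 := union_bound (enum Tstar) G.
rewrite set_enum setUC in H1; rewrite set_enum in H2; rewrite big_enum /= in H2.
rewrite HO0 add0r Hf0 subr0 in HO3.
rewrite /D in HO3; lra.
Qed.
End Greedy.
Set Implicit Arguments. Unset Strict Implicit. Unset Printing Implicit Defensive.

Section Cov.
Variables (R : realFieldType) (Ev : finType) (V : eqType) (phi : Ev -> V) (w : V -> R).
Definition cov (T : {set Ev}) := \sum_(v <- undup [seq phi e | e <- enum T]) w v.
Definition mcov (T : {set Ev}) x :=
  if phi x \in [seq phi e | e <- enum T] then 0 else w (phi x).

Lemma mem_map_enumU1 (T : {set Ev}) x v :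
  (v \in [seq phi e | e <- enum (x |: T)]) =
  (v == phi x) || (v \in [seq phi e | e <- enum T]).
Proof.
apply/mapP/orP => [[e]|[/eqP->|/mapP[e He ->]]].
- rewrite mem_enum in_setU1 => /orP[/eqP->|He] ->; first by left.
  by right; apply/mapP; exists e; rewrite ?mem_enum.
- by exists x; rewrite ?mem_enum ?setU11.
- by exists e; rewrite ?mem_enum ?setU1r // -mem_enum.
Qed.

Lemma cov_add T x : cov (x |: T) = cov T + mcov T x.
Proof.
rewrite /cov /mcov; case: ifP => Hx.
- rewrite addr0; apply: perm_big; apply: uniq_perm; rewrite ?undup_uniq //.
  move=> v; rewrite !mem_undup mem_map_enumU1.
  by case: eqP => // ->.
- rewrite addrC.
  transitivity (\sum_(v <- phi x :: undup [seq phi e | e <- enum T]) w v);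
    last by rewrite big_cons.
  apply: perm_big; apply: uniq_perm.
  + exact: undup_uniq.
  + by rewrite /= mem_undup Hx undup_uniq.
  move=> v; rewrite !inE !mem_undup mem_map_enumU1 //.
Qed.

Hypothesis w0 : forall v, 0 <= w v.

Lemma mcov_ge0 T x : 0 <= mcov T x.
Proof. by rewrite /mcov; case: ifP. Qed.

Lemma mcov_dec (A B : {set Ev}) x : A \subset B -> mcov B x <= mcov A x.
Proof.
move=> HAB; rewrite /mcov; case: ifP => HB; case: ifP => HA //.
exfalso; move: HA HB => /mapP[e He ->] /negbT /negP; apply.
by apply/mapP; exists e => //; rewrite mem_enum (subsetP HAB) // -mem_enum.
Qed.
End Cov.

Section RelProps.
Variables (R : realFieldType) (Ev : finType) (Ent PRE PT : eqType)
  (Sub RE : Ev -> Ent) (tau : Ev -> R) (piRE : Ev -> PRE) (piT : Ev -> PT)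
  (E2ECooc : Ent -> Ent -> R) (E2DCooc : Ent -> R -> R)
  (GlobalImportance : Ent -> R)
  (lambda we1 we2 we3 wd1 wd2 : R) (s : Ent).
Hypotheses (H1 : forall x y, 0 <= E2ECooc x y) (H2 : forall x t, 0 <= E2DCooc x t)
  (H3 : forall x, 0 <= GlobalImportance x) (Hl0 : 0 <= lambda) (Hl1 : lambda <= 1)
  (Hw1 : 0 <= we1) (Hw2 : 0 <= we2) (Hw3 : 0 <= we3) (Hw4 : 0 <= wd1) (Hw5 : 0 <= wd2).

Let f := Rel Sub RE tau piRE piT E2ECooc E2DCooc GlobalImportance
                 lambda we1 we2 we3 wd1 wd2 s.
Let a1 := avgE2EPath Sub RE piRE E2ECooc.
Let a2 := avgE2DPath Sub tau piT E2DCooc.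

Definition Mg (T : {set Ev}) x :=
  lambda * (we1 * mcov RE (E2ECooc s) T x + we2 * mcov piRE a1 T x
            + we3 * mcov RE GlobalImportance T x)
  + (1 - lambda) * (wd1 * mcov tau (E2DCooc s) T x + wd2 * mcov piT a2 T x).

Lemma Rel_add T x : f (x |: T) = f T + Mg T x.
Proof.
rewrite /f /Rel /Mg.
have -> : E2E RE E2ECooc s (x |: T) = E2E RE E2ECooc s T + mcov RE (E2ECooc s) T x
  := cov_add _ _ _ _.
have -> : E2EPath Sub RE piRE E2ECooc (x |: T) = E2EPath Sub RE piRE E2ECooc T
   + mcov piRE a1 T x := cov_add _ _ _ _.
have -> : G2E RE GlobalImportance (x |: T) = G2E RE GlobalImportance T
   + mcov RE GlobalImportance T x := cov_add _ _ _ _.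
have -> : E2D tau E2DCooc s (x |: T) = E2D tau E2DCooc s T
   + mcov tau (E2DCooc s) T x := cov_add _ _ _ _.
have -> : E2DPath Sub tau piT E2DCooc (x |: T) = E2DPath Sub tau piT E2DCooc T
   + mcov piT a2 T x := cov_add _ _ _ _.
ring.
Qed.

Lemma a1_ge0 p : 0 <= a1 p.
Proof. by apply: divr_ge0; [apply: sumr_ge0 => i _; apply: H1|apply: ler0n]. Qed.
Lemma a2_ge0 p : 0 <= a2 p.
Proof. by apply: divr_ge0; [apply: sumr_ge0 => i _; apply: H2|apply: ler0n]. Qed.

Lemma Mg_ge0 T x : 0 <= Mg T x.
Proof.
have Hl1' : 0 <= 1 - lambda by rewrite subr_ge0.
rewrite /Mg; apply: addr_ge0; apply: mulr_ge0 => //;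
  repeat apply: addr_ge0; apply: mulr_ge0 => //; apply: mcov_ge0 => //.
- exact: a1_ge0.
- exact: a2_ge0.
Qed.

Lemma Mg_dec (A B : {set Ev}) x : A \subset B -> Mg B x <= Mg A x.
Proof.
move=> HAB.
have Hl1' : 0 <= 1 - lambda by rewrite subr_ge0.
rewrite /Mg; apply: lerD; apply: ler_wpM2l => //;
  repeat apply: lerD; apply: ler_wpM2l => //; apply: mcov_dec => //.
- exact: a1_ge0.
- exact: a2_ge0.
Qed.

Lemma Rel_inc T x : f T <= f (x |: T).
Proof. by rewrite Rel_add lerDl; apply: Mg_ge0. Qed.

Lemma Rel_dec (A B : {set Ev}) x : A \subset B ->
  f (x |: B) - f B <= f (x |: A) - f A.
Proof.
move=> HAB; have := Mg_dec x HAB; rewrite !Rel_add.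
set u := Mg B x; set v := Mg A x; lra.
Qed.

Lemma Rel0 : f set0 = 0.
Proof.
rewrite /f /Rel /E2E /E2EPath /G2E /E2D /E2DPath !enum_set0 /= !big_nil.
ring.
Qed.
End RelProps.

Theorem theorem3 (R : realFieldType) (Ev : finType) (Ent PRE PT : eqType)
  (Sub RE : Ev -> Ent) (tau : Ev -> R) (piRE : Ev -> PRE) (piT : Ev -> PT)
  (E2ECooc : Ent -> Ent -> R) (E2DCooc : Ent -> R -> R)
  (GlobalImportance : Ent -> R)
  (lambda we1 we2 we3 wd1 wd2 : R) (tw : R) (n : nat)
  (E : {set Ev}) (s : Ent) (Tstar : {set Ev}) (l : seq Ev) :
  (forall x y, 0 <= E2ECooc x y) ->
  (forall x t, 0 <= E2DCooc x t) ->
  (forall x, 0 <= GlobalImportance x) ->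
  0 <= lambda -> lambda <= 1 ->
  0 <= we1 -> 0 <= we2 -> 0 <= we3 -> 0 <= wd1 -> 0 <= wd2 ->
  0 < tw -> (1 <= n)%N ->
  let Rel_s := Rel Sub RE tau piRE piT E2ECooc E2DCooc GlobalImportance
                 lambda we1 we2 we3 wd1 wd2 s in
  let I := layoutI tau tw n E in
  I Tstar -> (forall T, I T -> Rel_s T <= Rel_s Tstar) ->
  greedy_run E I Rel_s l ->
  Rel_s [set x in l] >= Rel_s Tstar / 3%:R.
Proof.
move=> H1 H2 H3 Hl0 Hl1 Hw1 Hw2 Hw3 Hw4 Hw5 Htw Hn Rel_s I HT Hopt Hg.
have HTE : Tstar \subset E by case: HT.
have Hb := @greedy_bound _ _ Rel_s I E _ _ _ _ _ Tstar l HT HTE Hg.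
rewrite ler_pdivrMr ?ltr0n // mulrC; apply: Hb.
- by move=> T x; apply: Rel_inc.
- by move=> A B x HAB; apply: Rel_dec.
- move=> T T'; exact: layout_sub.
- move=> A O x; exact: extend.
- exact: Rel0.
Qed.
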